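(* Let $p\in(1,\infty)$ and $Z$ a countable discrete measure space, and fix a bijection $Z\cong\mathbb N$, giving the standard Schauder basis $\{e_i\}_{i\in\mathbb N}$ of $\ell^p(Z)$. Let $F_n$ be the coordinate projection onto the span of $e_1,\dots,e_n$. Then for every $K\in\mathcal K^*(\ell^p(Z))$ we have $\lim_{n\to\infty}F_nKF_n=K$ in $\mathcal K^*(\ell^p(Z))$, i.e. $\|F_nKF_n-K\|_{\max}\to0$.
   Context: An operator $T$ on $\ell^p(Z)$ is regarded as a matrix with respect to $\{e_i\}$ and $T^*$ denotes the transpose matrix. $T$ is a dual-operator if $T$ and $T^*$ are both bounded on $\ell^p(Z)$; its maximal norm is $\|T\|_{\max}=\max\{\|T\|,\|T^*\|\}$. $T$ is a compact dual-operator if $T$ and $T^*$ are both compact operators on $\ell^p(Z)$. $\mathcal K^*(\ell^p(Z))$ is the Banach space of compact dual-operators with the maximal norm. *)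

(* Defs.v *)
(* l^p(Z) with Z identified with nat via the fixed bijection. *)
From HB Require Import structures.
From mathcomp Require Import all_boot all_order all_algebra.
From mathcomp Require Import all_classical all_reals all_analysis.
Set Implicit Arguments. Unset Strict Implicit. Unset Printing Implicit Defensive.
Import Order.TTheory GRing.Theory Num.Theory.
Import numFieldNormedType.Exports.
Local Open Scope classical_set_scope.
Local Open Scope ring_scope.

Section Lp.
Variables (R : realType) (p : R).

Definition lp_partial (x : nat -> R) (n : nat) : R := \sum_(k < n) `|x k| `^ p.

Definition inlp (x : nat -> R) : Prop := cvgn (lp_partial x).

Definition lpnorm (x : nat -> R) : R := (limn (lp_partial x)) `^ (p^-1).

Definition bdd_op (T : (nat -> R) -> (nat -> R)) : Prop :=
  [/\ (forall x, inlp x -> inlp (T x)),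
      (forall (a : R) x y, inlp x -> inlp y ->
          T (fun k => a * x k + y k) = (fun k => a * T x k + T y k)) &
      exists C : R, forall x, inlp x -> lpnorm (T x) <= C * lpnorm x].

Definition opnorm (T : (nat -> R) -> (nat -> R)) : R :=
  sup [set r | exists x, [/\ inlp x, lpnorm x <= 1 & r = lpnorm (T x)]].

Definition ebasis (j : nat) : nat -> R := fun k => (k == j)%:R.
Definition mat (T : (nat -> R) -> (nat -> R)) (i j : nat) : R := T (ebasis j) i.

Definition transpose_of (S T : (nat -> R) -> (nat -> R)) : Prop :=
  forall i j, mat S i j = mat T j i.

Definition compact_op (T : (nat -> R) -> (nat -> R)) : Prop :=
  bdd_op T /\
  forall u : nat -> (nat -> R), (forall n, inlp (u n)) ->
    (exists C : R, forall n, lpnorm (u n) <= C) ->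
    exists phi : nat -> nat, (forall n, (phi n < phi n.+1)%N) /\
      exists y, inlp y /\
        (fun n => lpnorm (fun k => T (u (phi n)) k - y k)) @ \oo --> (0 : R).

Definition dual_op (T : (nat -> R) -> (nat -> R)) : Prop :=
  bdd_op T /\ exists S, bdd_op S /\ transpose_of S T.

Definition compact_dual_op (T : (nat -> R) -> (nat -> R)) : Prop :=
  compact_op T /\ exists S, compact_op S /\ transpose_of S T.

(* norm of T^*: T^* is the (unique on l^p) bounded operator with the
   transpose matrix; all such S have the same operator norm, so this sup
   is over a singleton when T is a dual-operator *)
Definition opnorm_transpose (T : (nat -> R) -> (nat -> R)) : R :=
  sup [set r | exists S, [/\ bdd_op S, transpose_of S T & r = opnorm S]].

Definition maxnorm (T : (nat -> R) -> (nat -> R)) : R :=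
  Num.max (opnorm T) (opnorm_transpose T).

(* coordinate projection onto span{e_0,...,e_{n-1}} *)
Definition Fproj (n : nat) (x : nat -> R) : nat -> R :=
  fun k => if (k < n)%N then x k else 0.

End Lp.

(* Main.v *)
Require Import Defs.
From HB Require Import structures.
From mathcomp Require Import all_boot all_order all_algebra.
From mathcomp Require Import all_classical all_reals all_analysis.
From mathcomp Require Import ring lra.
Import Order.TTheory GRing.Theory Num.Theory.
Import numFieldNormedType.Exports.
Local Open Scope classical_set_scope.
Local Open Scope ring_scope.
Section S.
Variable R : realType.
Variable p : R.
Hypothesis hp : 1 < p.

Let p0 : 0 < p. Proof. by apply: lt_trans hp. Qed.
Let pn0 : p != 0. Proof. by rewrite gt_eqF. Qed.

Definition L (x : nat -> R) := limn (lp_partial p x).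
Local Notation N := (lpnorm p).
Local Notation part := (lp_partial p).

Lemma part_ge0 x n : 0 <= part x n.
Proof. by apply: sumr_ge0 => i _; exact: powR_ge0. Qed.

Lemma part_S x n : part x n.+1 = part x n + `|x n| `^ p.
Proof. by rewrite /lp_partial big_ord_recr. Qed.

Lemma part_nd x : nondecreasing_seq (part x).
Proof.
apply/nondecreasing_seqP => n; rewrite part_S lerDl; exact: powR_ge0.
Qed.

Lemma inlpP x : inlp p x <-> exists B, forall n, part x n <= B.
Proof.
split.
  move=> hx; exists (L x) => n; exact: nondecreasing_cvgn_le (part_nd x) hx n.
move=> [B hB]; apply: nondecreasing_is_cvgn; first exact: part_nd.
by exists B => _ [n _ <-].
Qed.

Lemma part_le_L x n : inlp p x -> part x n <= L x.
Proof. move=> hx; exact: nondecreasing_cvgn_le (part_nd x) hx n. Qed.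

Lemma L_le x B : (forall n, part x n <= B) -> L x <= B.
Proof.
move=> hB; have hx : inlp p x by apply/inlpP; exists B.
apply: limr_le => //; exact: nearW.
Qed.

Lemma L_ge0 x : inlp p x -> 0 <= L x.
Proof. move=> hx; exact: le_trans (part_ge0 x 0) (part_le_L x 0 hx). Qed.

Lemma N_ge0 x : 0 <= N x.
Proof. exact: powR_ge0. Qed.

Lemma Npow x : inlp p x -> N x `^ p = L x.
Proof.
move=> hx; rewrite /lpnorm -powRrM mulVf // powRr1 //; exact: L_ge0.
Qed.

Lemma powRK' (b : R) : 0 <= b -> (b `^ p) `^ p^-1 = b.
Proof. by move=> b0; rewrite -powRrM mulfV // powRr1. Qed.

Lemma N_le x B : inlp p x -> 0 <= B -> L x <= B `^ p -> N x <= B.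
Proof.
move=> hx B0 hL; rewrite /lpnorm -[X in _ <= X](powRK' B B0).
apply: ge0_ler_powR => //; rewrite ?invr_ge0 ?ltW // nnegrE ?L_ge0 //; exact: powR_ge0.
Qed.

Lemma N_leL x B : inlp p x -> 0 <= B -> N x <= B -> L x <= B `^ p.
Proof.
move=> hx B0 hN; rewrite -Npow //; apply: ge0_ler_powR => //; rewrite ?ltW // nnegrE //; exact: N_ge0.
Qed.

Definition vadd (x y : nat -> R) := fun k => x k + y k.
Definition vscal (a : R) (x : nat -> R) := fun k => a * x k.
Definition vsub (x y : nat -> R) := fun k => x k - y k.
Definition vzero : nat -> R := fun _ => 0.

Lemma dom x y c : 0 <= c -> inlp p x -> (forall n, part y n <= c * part x n) ->
  inlp p y /\ L y <= c * L x.
Proof.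
move=> c0 hx hy.
have hb : forall n, part y n <= c * L x.
  move=> n; apply: le_trans (hy n) _; apply: ler_wpM2l => //; exact: part_le_L.
split; first by apply/inlpP; exists (c * L x).
exact: L_le.
Qed.

Lemma part_dom x y n : (forall k, `|y k| <= `|x k|) -> part y n <= part x n.
Proof.
move=> h; apply: ler_sum => i _.
have := @ge0_ler_powR R p (ltW p0) `|y i| `|x i|.
by rewrite !nnegrE !normr_ge0 => /(_ isT isT (h i)).
Qed.

Lemma domN {x y : nat -> R} : inlp p x -> (forall k, `|y k| <= `|x k|) ->
  inlp p y /\ N y <= N x.
Proof.
move=> hx h; have [hy hL] : inlp p y /\ L y <= 1 * L x.
  by apply: dom => // n; rewrite mul1r; exact: part_dom.
split; first exact: hy.
apply: (@N_le y (N x) hy (N_ge0 x)).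
by rewrite Npow // -[L x]mul1r.
Qed.

Lemma part_scal a x n : part (vscal a x) n = `|a| `^ p * part x n.
Proof.
rewrite /lp_partial mulr_sumr; apply: eq_bigr => i _.
by rewrite /vscal normrM powRM.
Qed.

Lemma inlp_scal a {x : nat -> R} : inlp p x -> inlp p (vscal a x).
Proof.
move=> hx; have [] // := @dom x (vscal a x) (`|a| `^ p) (powR_ge0 _ _) hx.
by move=> n; rewrite part_scal.
Qed.

Lemma L_scal a x : inlp p x -> L (vscal a x) = `|a| `^ p * L x.
Proof.
move=> hx; apply/eqP; rewrite eq_le; apply/andP; split.
  have [] // := @dom x (vscal a x) (`|a| `^ p) (powR_ge0 _ _) hx.
  by move=> n; rewrite part_scal.
have [->|a0] := eqVneq a 0.
  by rewrite normr0 powR0 // mul0r; apply: L_ge0; exact: inlp_scal.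
have hax := @inlp_scal a x hx.
have := @dom (vscal a x) x (`|a^-1| `^ p) (powR_ge0 _ _) hax.
have e : forall n, part x n = `|a^-1| `^ p * part (vscal a x) n.
  move=> n; rewrite part_scal mulrA -powRM // normrV ?unitfE // mulVf ?normr_eq0 //.
  by rewrite powR1 mul1r.
have e' : forall n, part x n <= `|a^-1| `^ p * part (vscal a x) n by move=> n; rewrite e.
move=> /(_ e') [_ h].
have ap : 0 < `|a| `^ p by rewrite powR_gt0 // normr_gt0.
rewrite -(ler_pM2l ap) in h; apply: le_trans h _.
rewrite mulrA -powRM // normrV ?unitfE // mulfV ?normr_eq0 //.
by rewrite powR1 mul1r.
Qed.

Lemma N_scal a x : inlp p x -> N (vscal a x) = `|a| * N x.
Proof.
move=> hx; rewrite /lpnorm -/(L _) L_scal // powRM //; last exact: L_ge0.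
by rewrite powRK'.
Qed.


Lemma powR_mono {a b : R} : 0 <= a -> a <= b -> a `^ p <= b `^ p.
Proof.
move=> a0 ab; have := @ge0_ler_powR R p (ltW p0) a b.
by rewrite !nnegrE a0 (le_trans a0 ab) => /(_ isT isT ab).
Qed.

Lemma convp {l u v : R} : 0 <= l -> l <= 1 -> 0 <= u -> 0 <= v ->
  (l * u + (1 - l) * v) `^ p <= l * u `^ p + (1 - l) * v `^ p.
Proof.
move=> l0 l1 u0 v0.
have := @convex_powR R p (ltW hp) (Itv01 l0 l1) u v.
rewrite !inE /= !in_itv /= u0 v0 => /(_ erefl erefl).
by rewrite !convRE /=.
Qed.

Lemma L0_zero x : inlp p x -> N x = 0 -> forall k, x k = 0.
Proof.
move=> hx h k; have hL : L x = 0 by rewrite -Npow // h powR0.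
have := part_le_L x k.+1 hx; rewrite hL part_S => h2.
have h3 : `|x k| `^ p <= 0.
  by apply: le_trans h2; rewrite lerDr; exact: part_ge0.
have : `|x k| `^ p = 0 by apply/eqP; rewrite eq_le h3 powR_ge0.
by move/powR_eq0_eq0/eqP; rewrite normr_eq0 => /eqP.
Qed.

Lemma tri_term (a b xk yk : R) : 0 < a -> 0 < b ->
  `|xk + yk| `^ p <= (a + b) `^ p * (a / (a + b)) / a `^ p * `|xk| `^ p
     + (a + b) `^ p * (1 - a / (a + b)) / b `^ p * `|yk| `^ p.
Proof.
move=> ap bp.
have abp : 0 < a + b := addr_gt0 ap bp.
set l := a / (a + b).
have l0 : 0 <= l := divr_ge0 (ltW ap) (ltW abp).
have l1 : l <= 1.
  rewrite /l (ler_pdivrMr _ _ abp) mul1r lerDl; exact: ltW bp.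
have e1 : l * (a + b) = a by rewrite /l mulfVK // gt_eqF.
have e2 : (1 - l) * (a + b) = b by rewrite mulrBl mul1r e1 addrC addKr.
set u := `|xk| / a; set v := `|yk| / b.
have u0 : 0 <= u := divr_ge0 (normr_ge0 _) (ltW ap).
have v0 : 0 <= v := divr_ge0 (normr_ge0 _) (ltW bp).
have hxk : `|xk| = a * u by rewrite /u mulrC mulfVK // gt_eqF.
have hyk : `|yk| = b * v by rewrite /v mulrC mulfVK // gt_eqF.
have h1 : `|xk + yk| <= (a + b) * (l * u + (1 - l) * v).
  have -> : (a + b) * (l * u + (1 - l) * v) = (l * (a + b)) * u + ((1 - l) * (a + b)) * v.
    by ring.
  rewrite e1 e2 -hxk -hyk; exact: ler_normD.
apply: le_trans (powR_mono (normr_ge0 _) h1) _.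
have w0 : 0 <= l * u + (1 - l) * v.
  by apply: addr_ge0; apply: mulr_ge0 => //; rewrite subr_ge0.
rewrite (@powRM R (a + b) _ p (ltW abp) w0).
have h2 := convp l0 l1 u0 v0.
apply: le_trans (ler_wpM2l (powR_ge0 _ _) h2) _.
rewrite hxk hyk (@powRM R a _ p (ltW ap) u0) (@powRM R b _ p (ltW bp) v0).
have pa : a `^ p != 0 by rewrite gt_eqF // powR_gt0.
have pb : b `^ p != 0 by rewrite gt_eqF // powR_gt0.
rewrite le_eqVlt; apply/orP; left; apply/eqP.
clearbody l u v; move: (u `^ p) (v `^ p) (a `^ p) (b `^ p) pa pb ((a + b) `^ p) => U V A B pa pb C.
have k1 : forall X Y : R, X / A * (A * Y) = X * Y by move=> X Y; rewrite mulrA divfK.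
have k2 : forall X Y : R, X / B * (B * Y) = X * Y by move=> X Y; rewrite mulrA divfK.
by rewrite k1 k2 mulrDr !mulrA.
Qed.

Lemma tri {x y : nat -> R} : inlp p x -> inlp p y -> inlp p (vadd x y) /\ N (vadd x y) <= N x + N y.
Proof.
move=> hx hy.
have [a0|a0] := eqVneq (N x) 0.
  have -> : vadd x y = y by apply: funext => k; rewrite /vadd (@L0_zero x hx a0 k) add0r.
  by rewrite a0 add0r.
have [b0|b0] := eqVneq (N y) 0.
  have -> : vadd x y = x by apply: funext => k; rewrite /vadd (@L0_zero y hy b0 k) addr0.
  by rewrite b0 addr0.
have ap : 0 < N x by rewrite lt0r a0 N_ge0.
have bp : 0 < N y by rewrite lt0r b0 N_ge0.
have hx2 : forall n, part x n <= N x `^ p by move=> n; rewrite Npow //; exact: part_le_L.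
have hy2 : forall n, part y n <= N y `^ p by move=> n; rewrite Npow //; exact: part_le_L.
move: (N x) (N y) ap bp hx2 hy2 => a b ap bp hx2 hy2 {a0 b0}.
have abp : 0 < a + b := addr_gt0 ap bp.
have pa : 0 < a `^ p := powR_gt0 _ ap.
have pb : 0 < b `^ p := powR_gt0 _ bp.
set c1 := (a + b) `^ p * (a / (a + b)) / a `^ p.
set c2 := (a + b) `^ p * (1 - a / (a + b)) / b `^ p.
have c10 : 0 <= c1.
  apply: divr_ge0 (ltW pa); apply: mulr_ge0 (powR_ge0 _ _) _; exact: divr_ge0 (ltW ap) (ltW abp).
have c20 : 0 <= c2.
  apply: divr_ge0 (ltW pb); apply: mulr_ge0 (powR_ge0 _ _) _.
  rewrite subr_ge0 (ler_pdivrMr _ _ abp) mul1r lerDl; exact: ltW bp.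
have hpart : forall n, part (vadd x y) n <= (a + b) `^ p.
  move=> n.
  have h : forall i : 'I_n, true -> `|vadd x y i| `^ p <= c1 * `|x i| `^ p + c2 * `|y i| `^ p.
    by move=> i _; exact: tri_term.
  rewrite /lp_partial; apply: le_trans (ler_sum _ h) _.
  rewrite big_split /= -!mulr_sumr -/(part x n) -/(part y n).
  apply: le_trans (lerD (ler_wpM2l c10 (hx2 n)) (ler_wpM2l c20 (hy2 n))) _.
  have pa' : a `^ p != 0 by rewrite gt_eqF.
  have pb' : b `^ p != 0 by rewrite gt_eqF.
  have ab' : a + b != 0 by rewrite gt_eqF.
  rewrite le_eqVlt; apply/orP; left; apply/eqP.
  rewrite /c1 /c2 (divfK pa') (divfK pb') -mulrDr subrKC mulr1.
  exact: erefl.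
have hxy : inlp p (vadd x y) by apply/inlpP; exists ((a + b) `^ p); exact: hpart.
split; first exact: hxy.
apply: (@N_le (vadd x y) (a + b) hxy (ltW abp)).
exact: L_le.
Qed.

Lemma part0 n : part vzero n = 0.
Proof. by rewrite /lp_partial big1 // => i _; rewrite normr0 powR0. Qed.

Lemma inlp0 : inlp p vzero.
Proof. by apply/inlpP; exists 0 => n; rewrite part0. Qed.

Lemma N0 : N vzero = 0.
Proof.
apply/eqP; rewrite eq_le N_ge0 andbT; apply: N_le => //; first exact: inlp0.
by apply: L_le => n; rewrite part0 powR0.
Qed.

Lemma vsubE x y : vsub x y = vadd x (vscal (-1) y).
Proof. by apply: funext => k; rewrite /vsub /vadd /vscal mulN1r. Qed.

Lemma inlp_sub {x y : nat -> R} : inlp p x -> inlp p y -> inlp p (vsub x y).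
Proof. by move=> hx hy; rewrite vsubE; case: (tri hx (inlp_scal (-1) hy)). Qed.

Lemma N_symm {x y : nat -> R} : inlp p x -> inlp p y -> N (vsub x y) = N (vsub y x).
Proof.
move=> hx hy; have -> : vsub x y = vscal (-1) (vsub y x).
  by apply: funext => k; rewrite /vsub /vscal mulN1r opprB.
by rewrite (@N_scal (-1) _ (inlp_sub hy hx)) normrN normr1 mul1r.
Qed.

Lemma N_tri_sub {x y z : nat -> R} : inlp p x -> inlp p y -> inlp p z ->
  N (vsub x z) <= N (vsub x y) + N (vsub y z).
Proof.
move=> hx hy hz; have -> : vsub x z = vadd (vsub x y) (vsub y z).
  by apply: funext => k; rewrite /vsub /vadd addrA subrK.
by case: (tri (inlp_sub hx hy) (inlp_sub hy hz)) => _ h; exact: h.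
Qed.

Lemma N_rev {x y : nat -> R} : inlp p x -> inlp p y -> N x - N (vsub x y) <= N y.
Proof.
move=> hx hy.
have e : vadd (vsub x y) y = x by apply: funext => k; rewrite /vsub /vadd subrK.
have [_ h] := tri (inlp_sub hx hy) hy.
rewrite e in h.
rewrite lerBlDr addrC; exact: h.
Qed.

Definition tail n (x : nat -> R) := fun k => if (k < n)%N then 0 else x k.

Lemma Fproj_dom n (x : nat -> R) k : `|Fproj n x k| <= `|x k|.
Proof. by rewrite /Fproj; case: ifP => // _; rewrite normr0. Qed.

Lemma tail_dom n (x : nat -> R) k : `|tail n x k| <= `|x k|.
Proof. by rewrite /tail; case: ifP => // _; rewrite normr0. Qed.

Lemma inlp_F n {x : nat -> R} : inlp p x -> inlp p (Fproj n x).
Proof. by move=> hx; case: (domN hx (Fproj_dom n x)). Qed.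

Lemma N_F n {x : nat -> R} : inlp p x -> N (Fproj n x) <= N x.
Proof. by move=> hx; case: (domN hx (Fproj_dom n x)). Qed.

Lemma inlp_tail n {x : nat -> R} : inlp p x -> inlp p (tail n x).
Proof. by move=> hx; case: (domN hx (tail_dom n x)). Qed.

Lemma N_tail n {x : nat -> R} : inlp p x -> N (tail n x) <= N x.
Proof. by move=> hx; case: (domN hx (tail_dom n x)). Qed.

Lemma FtailE n (x : nat -> R) : x = vadd (Fproj n x) (tail n x).
Proof. by apply: funext => k; rewrite /vadd /Fproj /tail; case: ifP; rewrite ?addr0 ?add0r. Qed.

Lemma tailE n (x : nat -> R) : tail n x = vsub x (Fproj n x).
Proof. by apply: funext => k; rewrite /vsub /Fproj /tail; case: ifP; rewrite ?subrr ?subr0. Qed.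

Lemma part_tail n (x : nat -> R) m : part (tail n x) m + part x n <= part x (maxn m n).
Proof.
elim: m => [|m IH]; first by rewrite max0n /lp_partial big_ord0 add0r.
rewrite part_S; case: (ltnP m n) => hmn.
  rewrite {2}/tail hmn normr0 powR0 // addr0.
  apply: le_trans IH _; apply: part_nd; rewrite geq_max leq_maxr andbT.
  by apply: leq_trans (leq_maxl m.+1 n).
rewrite (maxn_idPl hmn) in IH.
rewrite {2}/tail ltnNge hmn /= (maxn_idPl (leqW hmn)) part_S.
rewrite addrAC lerD2r; exact: IH.
Qed.

Lemma tail_small (x : nat -> R) e : inlp p x -> 0 < e ->
  exists n0, forall n, (n0 <= n)%N -> N (tail n x) <= e.
Proof.
move=> hx e0.
have ep : 0 < e `^ p by rewrite powR_gt0.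
have /cvgrPdist_le /(_ _ ep) := hx.
rewrite -/(L x) => -[n0 _ hn0]; exists n0 => n hn.
apply: N_le; [exact: inlp_tail | exact: ltW |].
apply: L_le => m.
have h1 := hn0 n hn; rewrite /= in h1.
have h2 := part_tail n x m.
have h3 := part_le_L x (maxn m n) hx.
rewrite ger0_norm in h1; last by rewrite subr_ge0; exact: part_le_L.
move: h1 h2 h3; set A := part (tail n x) m; set B := part x n; set C := part x (maxn m n).
move=> h1 h2 h3; lra.
Qed.


Section Ops.
Variable T : (nat -> R) -> (nat -> R).
Hypothesis hT : bdd_op p T.

Lemma op_inlp {x} : inlp p x -> inlp p (T x).
Proof. by case: hT => h _ _; exact: h. Qed.

Lemma op_lin a {x y} : inlp p x -> inlp p y -> T (vadd (vscal a x) y) = vadd (vscal a (T x)) (T y).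
Proof. by case: hT => _ h _; exact: h. Qed.

Lemma op_add {x y} : inlp p x -> inlp p y -> T (vadd x y) = vadd (T x) (T y).
Proof.
move=> hx hy.
have e1 : vadd x y = vadd (vscal 1 x) y by apply: funext => k; rewrite /vadd /vscal mul1r.
have e2 : vadd (T x) (T y) = vadd (vscal 1 (T x)) (T y) by apply: funext => k; rewrite /vadd /vscal mul1r.
by rewrite e1 e2 op_lin.
Qed.

Lemma op_zero : T vzero = vzero.
Proof.
have e : vzero = vadd vzero vzero by apply: funext => k; rewrite /vadd /vzero addr0.
have h := op_add inlp0 inlp0; rewrite -e in h.
apply: funext => k; have := congr1 (fun f => f k) h; rewrite /vadd /= => h2.
have : T vzero k + T vzero k - T vzero k = T vzero k - T vzero k by rewrite -h2.
by rewrite addrK subrr.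
Qed.

Lemma op_scal a {x} : inlp p x -> T (vscal a x) = vscal a (T x).
Proof.
move=> hx.
have e1 : vscal a x = vadd (vscal a x) vzero by apply: funext => k; rewrite /vadd /vzero addr0.
have e2 : vscal a (T x) = vadd (vscal a (T x)) vzero by apply: funext => k; rewrite /vadd /vzero addr0.
by rewrite e1 e2 op_lin ?op_zero //; exact: inlp0.
Qed.

Lemma op_sub {x y} : inlp p x -> inlp p y -> T (vsub x y) = vsub (T x) (T y).
Proof.
move=> hx hy; rewrite !vsubE op_add //; last exact: inlp_scal.
by rewrite op_scal.
Qed.

Lemma op_bound : exists C, 0 <= C /\ forall x, inlp p x -> N (T x) <= C * N x.
Proof.
case: hT => _ _ [C hC]; exists (Num.max C 0); split; first by rewrite le_max lexx orbT.
move=> x hx; apply: le_trans (hC x hx) _; apply: ler_wpM2r; first exact: N_ge0.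
by rewrite le_max lexx.
Qed.

End Ops.
Arguments op_inlp {T} hT {x}.
Arguments op_lin {T} hT a {x y}.
Arguments op_add {T} hT {x y}.
Arguments op_zero {T} hT.
Arguments op_scal {T} hT a {x}.
Arguments op_sub {T} hT {x y}.
Arguments op_bound {T} hT.

Lemma part_e j n : part (ebasis R j) n = (j < n)%:R.
Proof.
elim: n => [|n IH]; first by rewrite /lp_partial big_ord0.
rewrite part_S IH /ebasis /=; case: (ltngtP j n) => h.
- by rewrite normr0 powR0 // addr0 ltnS (ltnW h).
- by rewrite normr0 powR0 // addr0 ltnS leqNgt h.
- by rewrite normr1 powR1 add0r h ltnSn.
Qed.

Lemma inlp_e j : inlp p (ebasis R j).
Proof.
apply/inlpP; exists 1 => n; rewrite part_e; case: (j < n)%N => //=.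
Qed.

Lemma Fproj_e n j : Fproj n (ebasis R j) = if (j < n)%N then ebasis R j else vzero.
Proof.
apply: funext => k; rewrite /Fproj /ebasis /vzero.
case: ifP => hk; case: ifP => hj //.
- have -> : (k == j) = false by apply/negP => /eqP e; rewrite e hj in hk.
  by [].
- have -> : (k == j) = false by apply/negP => /eqP e; rewrite -e hk in hj.
  by [].
Qed.

Lemma Fproj0 x : Fproj 0 x = vzero.
Proof. by apply: funext => k; rewrite /Fproj. Qed.

Lemma FprojS m x : Fproj m.+1 x = vadd (vscal (x m) (ebasis R m)) (Fproj m x).
Proof.
apply: funext => k; rewrite /Fproj /vadd /vscal /ebasis ltnS leq_eqVlt.
case: (ltngtP k m) => h /=.
- by rewrite mulr0 add0r.
- by rewrite mulr0 addr0.
- by rewrite mulr1 addr0 h.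
Qed.

Lemma agree_F A B : bdd_op p A -> bdd_op p B ->
  (forall j, A (ebasis R j) = B (ebasis R j)) ->
  forall m x, inlp p x -> A (Fproj m x) = B (Fproj m x).
Proof.
move=> hA hB he; elim=> [|m IH] x hx; first by rewrite Fproj0 !op_zero.
have hF := inlp_F m hx.
rewrite FprojS (op_lin hA _ (inlp_e m) hF) (op_lin hB _ (inlp_e m) hF).
by rewrite he IH.
Qed.


Lemma cvg0_ev (u : nat -> R) : u @ \oo --> 0 ->
  forall e, 0 < e -> exists n0, forall n, (n0 <= n)%N -> u n <= e.
Proof.
move/cvgrPdist_le => h e he; have [n0 _ hn] := h e he; exists n0 => n hn0.
have := hn n hn0; rewrite /= sub0r normrN; apply: le_trans; exact: ler_norm.
Qed.

Lemma phi_ge (phi : nat -> nat) : (forall n, (phi n < phi n.+1)%N) -> forall k, (k <= phi k)%N.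
Proof.
move=> h; elim=> [|k IH] //; apply: leq_ltn_trans IH (h k).
Qed.

Lemma powR_mono_r (r a b : R) : 0 <= r -> 0 <= a -> a <= b -> a `^ r <= b `^ r.
Proof.
move=> r0 a0 ab; have := @ge0_ler_powR R r r0 a b.
by rewrite !nnegrE a0 (le_trans a0 ab) => /(_ isT isT ab).
Qed.

Lemma growth C e : 0 <= C -> 0 < e -> exists J : nat, C * (J%:R `^ p^-1) < J%:R * (e / 4).
Proof.
move=> C0 e0.
have ip1 : p^-1 < 1 by rewrite invf_lt1.
set r := 1 - p^-1.
have r0 : 0 < r by rewrite /r subr_gt0.
set Xv := 4 * C / e + 1.
have Xv0 : 0 <= Xv.
  rewrite /Xv; apply: addr_ge0 => //; apply: divr_ge0 (ltW e0); exact: mulr_ge0.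
set B := Xv `^ r^-1.
exists (Num.truncn B).+1.
set J : R := (Num.truncn B).+1%:R.
have JB : B < J := truncnS_gt B.
have J0 : 0 < J by rewrite /J ltr0Sn.
have B0 : 0 <= B := powR_ge0 _ _.
have hJr : Xv <= J `^ r.
  have -> : Xv = B `^ r by rewrite /B -powRrM mulVf ?gt_eqF // powRr1.
  exact: powR_mono_r (ltW r0) B0 (ltW JB).
have hJ : J = J `^ p^-1 * J `^ r.
  rewrite -powRD; last by apply/implyP => _; rewrite gt_eqF.
  by rewrite /r addrC subrK powRr1 // ltW.
have a0 : 0 < J `^ p^-1 := powR_gt0 _ J0.
rewrite [X in _ < X * _]hJ -mulrA [C * _]mulrC (ltr_pM2l a0).
have h1 : Xv * (e / 4) <= J `^ r * (e / 4).
  by apply: ler_wpM2r hJr; apply: divr_ge0 (ltW e0) _.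
apply: lt_le_trans h1.
rewrite /Xv mulrDl mul1r.
have -> : 4 * C / e * (e / 4) = C.
  by rewrite mulrA divfK ?gt_eqF // mulrC mulrA mulVf ?mul1r // (_ : (4 : R) = 4%:R) // pnatr_eq0.
rewrite ltrDl; exact: divr_gt0 e0 _.
Qed.

Lemma disj_L a b c : inlp p a -> inlp p b ->
  (forall k, (c <= k)%N -> a k = 0) -> (forall k, (k < c)%N -> b k = 0) ->
  L (vadd a b) <= L a + L b.
Proof.
move=> ha hb hac hbc; apply: L_le => n.
have -> : part (vadd a b) n = part a n + part b n.
  rewrite /lp_partial -big_split; apply: eq_bigr => i _ /=; rewrite /vadd.
  case: (ltnP i c) => h.
    by rewrite (hbc i h) addr0 normr0 powR0 // addr0.
  by rewrite (hac i h) add0r normr0 powR0 // add0r.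
exact: lerD (part_le_L a n ha) (part_le_L b n hb).
Qed.


Lemma tail_vadd n (x y : nat -> R) : tail n (vadd x y) = vadd (tail n x) (tail n y).
Proof. by apply: funext => k; rewrite /tail /vadd; case: ifP; rewrite ?addr0. Qed.

Lemma partA T : compact_op p T -> forall e, 0 < e ->
  exists n0, forall n, (n0 <= n)%N -> forall x, inlp p x -> N x <= 1 ->
    N (tail n (T x)) <= e.
Proof.
move=> [hT hc] e he.
apply: contrapT => hneg.
have H : forall n0, exists nx : nat * (nat -> R),
    [/\ (n0 <= nx.1)%N, inlp p nx.2, N nx.2 <= 1 & e < N (tail nx.1 (T nx.2))].
  move=> n0; apply: contrapT => h2; apply: hneg; exists n0 => n hn x hx hx1.
  rewrite leNgt; apply/negP => hlt; apply: h2; exists (n, x); split.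
  - exact: hn.
  - exact: hx.
  - exact: hx1.
  - exact: hlt.
have [g hg] := choice H.
pose u k := (g k).2.
have hu : forall k, inlp p (u k) by move=> k; case: (hg k).
have hub : exists C, forall k, N (u k) <= C by exists 1 => k; case: (hg k).
have [phi [hphi [y [hy hconv]]]] := hc u hu hub.
have e2 : 0 < e / 2 by apply: divr_gt0.
have e3 : 0 < e / 3 by apply: divr_gt0.
have [K1 hK1] := cvg0_ev _ hconv _ e2.
have [M hM] := @tail_small y (e / 3) hy e3.
set k := maxn K1 M.
have hk1 : (K1 <= k)%N := leq_maxl K1 M.
have hkM : (M <= k)%N := leq_maxr K1 M.
have [hn1 hin hN1 hlt] := hg (phi k).
set n := (g (phi k)).1 in hn1 hlt.
have hMn : (M <= n)%N := leq_trans hkM (leq_trans (phi_ge _ hphi k) hn1).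
have hTu := op_inlp hT (hu (phi k)).
have hd := inlp_sub hTu hy.
have hsplit : tail n (T (u (phi k))) = vadd (tail n (vsub (T (u (phi k))) y)) (tail n y).
  rewrite -tail_vadd; congr tail; apply: funext => j; rewrite /vadd /vsub subrK //.
have [_ htri] := tri (inlp_tail n hd) (inlp_tail n hy).
rewrite -hsplit in htri.
have h1 : N (tail n (vsub (T (u (phi k))) y)) <= e / 2.
  apply: le_trans (N_tail n hd) _; exact: hK1 k hk1.
have h2 : N (tail n y) <= e / 3 := hM n hMn.
have : e < e / 2 + e / 3.
  apply: lt_le_trans hlt _; apply: le_trans htri _; exact: lerD h1 h2.
move=> hcon; move: he hcon; clear; move: e => e he hcon; lra.
Qed.


Lemma arith_half (e a b : R) : 0 < e -> e < a + b -> b <= e / 2 -> e / 2 < a.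
Proof. move=> *; lra. Qed.

Lemma arithB (a Ny J Jp C e : R) : 0 <= J -> e / 2 - e / 8 <= Ny ->
  J * Ny - J * (e / 8) <= a -> a <= C * Jp -> C * Jp < J * (e / 4) -> False.
Proof. move=> *; nra. Qed.

Lemma arith_Cd (C e : R) : 0 <= C -> 0 < e -> C * (e / (2 * (C + 1))) <= e / 2.
Proof.
move=> C0 e0; have C1 : 0 < 2 * (C + 1) by apply: mulr_gt0 => //; apply: ltr_wpDl C0 ltr01.
rewrite mulrA ler_pdivrMr //; nra.
Qed.

Lemma mono_nat (f : nat -> nat) : (forall k, (f k <= f k.+1)%N) ->
  forall i j, (i <= j)%N -> (f i <= f j)%N.
Proof.
move=> h i j hij; rewrite -(subnK hij); elim: (j - i)%N => [|d IH]; first by rewrite add0n.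
rewrite addSn; exact: leq_trans IH (h _).
Qed.

Lemma partB T : compact_op p T -> forall e, 0 < e ->
  exists n0, forall n, (n0 <= n)%N -> forall x, inlp p x -> N x <= 1 ->
    N (T (tail n x)) <= e.
Proof.
move=> [hT hc] e he.
have [C [C0 hC]] := op_bound hT.
apply: contrapT => hneg.
have H1 : forall n0, exists nx : nat * (nat -> R),
    [/\ (n0 <= nx.1)%N, inlp p nx.2, N nx.2 <= 1 & e < N (T (tail nx.1 nx.2))].
  move=> n0; apply: contrapT => h2; apply: hneg; exists n0 => n hn x hx hx1.
  rewrite leNgt; apply/negP => hlt; apply: h2; exists (n, x); split.
  - exact: hn.
  - exact: hx.
  - exact: hx1.
  - exact: hlt.
have H : forall m, exists Mw : nat * (nat -> R),
   [/\ (m <= Mw.1)%N, inlp p Mw.2, N Mw.2 <= 1,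
       (forall k, (k < m)%N -> Mw.2 k = 0) /\ (forall k, (Mw.1 <= k)%N -> Mw.2 k = 0)
     & e / 2 < N (T Mw.2)].
  move=> m; have [[n x] [/= hmn hx hx1 hlt]] := H1 m.
  have hz := inlp_tail n hx.
  have hz1 : N (tail n x) <= 1 := le_trans (N_tail n hx) hx1.
  have C1 : 0 < C + 1 by apply: ltr_wpDl C0 ltr01.
  set d := e / (2 * (C + 1)).
  have d0 : 0 < d by apply: divr_gt0 => //; apply: mulr_gt0.
  have [M0 hM0] := @tail_small (tail n x) d hz d0.
  set M := maxn M0 n.
  have hFz := inlp_F M hz.
  have htz := inlp_tail M hz.
  exists (M, Fproj M (tail n x)); split => /=.
  - exact: leq_trans hmn (leq_maxr M0 n).
  - exact: hFz.
  - exact: le_trans (N_F M hz) hz1.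
  - split => k hk.
      rewrite /Fproj /tail; case: ifP => _ //.
      by rewrite (leq_trans hk hmn).
    by rewrite /Fproj ltnNge hk.
  have hsp : T (tail n x) = vadd (T (Fproj M (tail n x))) (T (tail M (tail n x))).
    by rewrite -(op_add hT hFz htz) -FtailE.
  have [_ htri] := tri (op_inlp hT hFz) (op_inlp hT htz).
  rewrite -hsp in htri.
  have hb : N (T (tail M (tail n x))) <= e / 2.
    have hb1 : C * N (tail M (tail n x)) <= C * d := ler_wpM2l C0 (hM0 M (leq_maxl M0 n)).
    exact: le_trans (hC _ htz) (le_trans hb1 (arith_Cd _ _ C0 he)).
  apply: arith_half he _ hb.
  exact: lt_le_trans hlt htri.
have [g hg] := choice H.
pose mm := fix f (k : nat) : nat := if k is k'.+1 then (g (f k')).1 else 0%N.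
pose ww k := (g (mm k)).2.
have hw_in : forall k, inlp p (ww k) by move=> k; case: (hg (mm k)).
have hw1 : forall k, N (ww k) <= 1 by move=> k; case: (hg (mm k)).
have hw_lo : forall k j, (j < mm k)%N -> ww k j = 0.
  by move=> k j hj; case: (hg (mm k)) => _ _ _ [h _] _; exact: h.
have hw_hi : forall k j, (mm k.+1 <= j)%N -> ww k j = 0.
  by move=> k j hj; case: (hg (mm k)) => _ _ _ [_ h] _; exact: h.
have hw_big : forall k, e / 2 < N (T (ww k)) by move=> k; case: (hg (mm k)).
have mmS : forall k, (mm k <= mm k.+1)%N by move=> k; case: (hg (mm k)).
have mmM := mono_nat _ mmS.
have [phi [hphi [y [hy hconv]]]] := hc ww hw_in (ex_intro _ 1 hw1).
have e8 : 0 < e / 8 by apply: divr_gt0.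
have [K0 hK0] := cvg0_ev _ hconv _ e8.
have hNy : e / 2 - e / 8 <= N y.
  have hTw := op_inlp hT (hw_in (phi K0)).
  have h1 := N_rev hTw hy.
  have h2 : N (vsub (T (ww (phi K0))) y) <= e / 8 := hK0 K0 (leqnn K0).
  apply: le_trans h1; apply: lerB; [exact: ltW (hw_big _)| exact: h2].
pose s := fix f (J : nat) : nat -> R :=
  if J is J'.+1 then vadd (f J') (ww (phi (K0 + J')%N)) else vzero.
have inv : forall J, [/\ inlp p (s J), (forall k, (mm (phi (K0 + J)%N) <= k)%N -> s J k = 0),
    L (s J) <= J%:R & N (vsub (T (s J)) (vscal J%:R y)) <= J%:R * (e / 8)].
  elim=> [|J [hs hz hL hN]].
    split.
    - exact: inlp0.
    - by [].
    - by apply: L_le => n; rewrite part0.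
    - have -> : vsub (T (s 0%N)) (vscal 0%:R y) = vzero.
        by apply: funext => k; rewrite /= (op_zero hT) /vsub /vscal /vzero mul0r subr0.
      by rewrite N0 mul0r.
  set w := ww (phi (K0 + J)%N).
  have hw := hw_in (phi (K0 + J)%N).
  have hsS : s J.+1 = vadd (s J) w by [].
  have hlt : (phi (K0 + J) < phi (K0 + J.+1))%N by rewrite addnS; exact: hphi.
  split.
  - by rewrite hsS; case: (tri hs hw).
  - move=> k hk; rewrite hsS /vadd.
    have h1 : (mm (phi (K0 + J)).+1 <= k)%N := leq_trans (mmM _ _ hlt) hk.
    rewrite /w (hw_hi _ _ h1) addr0; apply: hz.
    exact: leq_trans (mmS _) h1.
  - rewrite hsS; apply: le_trans (disj_L _ _ _ hs hw hz (hw_lo _)) _.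
    rewrite -addn1 natrD; apply: lerD hL _.
    have := N_leL _ _ hw ler01 (hw1 _); rewrite powR1; exact.
  - rewrite hsS (op_add hT hs hw).
    have -> : vsub (vadd (T (s J)) (T w)) (vscal J.+1%:R y)
        = vadd (vsub (T (s J)) (vscal J%:R y)) (vsub (T w) y).
      apply: funext => k; rewrite /vsub /vadd /vscal -addn1 natrD mulrDl mul1r.
      by ring.
    have hTs := op_inlp hT hs; have hTw := op_inlp hT hw.
    have [_ htri] := tri (inlp_sub hTs (inlp_scal J%:R hy)) (inlp_sub hTw hy).
    apply: le_trans htri _.
    rewrite -addn1 natrD mulrDl mul1r; apply: lerD hN _.
    apply: hK0; exact: leq_addr.
have [J hJ] := growth _ _ C0 he.
have [hs _ hL hN] := inv J.
have hTs := op_inlp hT hs.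
have J0 : 0 <= J%:R :> R := ler0n _ J.
have hup : N (T (s J)) <= C * (J%:R `^ p^-1).
  have hNs : N (s J) <= J%:R `^ p^-1.
    apply: (N_le _ _ hs (powR_ge0 _ _)).
    by rewrite -powRrM mulVf // powRr1.
  exact: le_trans (hC _ hs) (ler_wpM2l C0 hNs).
have hlow : J%:R * N y - J%:R * (e / 8) <= N (T (s J)).
  have hJy := inlp_scal J%:R hy.
  have h1 := N_rev hJy hTs.
  rewrite (N_symm hJy hTs) in h1.
  rewrite (N_scal _ _ hy) (ger0_norm J0) in h1.
  apply: le_trans h1; apply: lerB => //; exact: hN.
exact: arithB J0 hNy hlow hup hJ.
Qed.


Lemma squeeze0 (a b : nat -> R) : (forall n, 0 <= a n <= b n) -> b @ \oo --> 0 -> a @ \oo --> 0.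
Proof.
move=> h hb.
apply: (@squeeze_cvgr _ _ _ _ (fun=> 0) b a _ 0 (cvg_cst 0) hb).
exact: nearW.
Qed.

Lemma N_sub_le {a b : nat -> R} : inlp p a -> inlp p b -> N (vsub a b) <= N a + N b.
Proof.
move=> ha hb; rewrite vsubE.
have [_ h] := tri ha (inlp_scal (-1) hb).
apply: le_trans h _; rewrite (N_scal _ _ hb) normrN normr1 mul1r; exact: lexx.
Qed.

Lemma main_bound T : compact_op p T -> forall e, 0 < e ->
  exists n0, forall n, (n0 <= n)%N -> forall x, inlp p x -> N x <= 1 ->
    N (vsub (Fproj n (T (Fproj n x))) (T x)) <= e.
Proof.
move=> hc e he; have hT := hc.1.
have e2 : 0 < e / 2 by apply: divr_gt0.
have [nA hA] := partA _ hc _ e2.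
have [nB hB] := partB _ hc _ e2.
exists (maxn nA nB) => n hn x hx hx1.
have hx' := inlp_tail n hx.
have hTt := op_inlp hT hx'.
have hTx := op_inlp hT hx.
have E : vsub (Fproj n (T (Fproj n x))) (T x) = vsub (vscal (-1) (Fproj n (T (tail n x)))) (tail n (T x)).
  rewrite tailE (op_sub hT hx (inlp_F n hx)).
  apply: funext => k; rewrite /vsub /vscal /Fproj /tail; case: ifP => _.
    by rewrite mulN1r opprB subr0.
  by rewrite mulr0.
rewrite E.
apply: le_trans (N_sub_le (inlp_scal (-1) (inlp_F n hTt)) (inlp_tail n hTx)) _.
rewrite (N_scal _ _ (inlp_F n hTt)) normrN normr1 mul1r.
have h1 : N (Fproj n (T (tail n x))) <= e / 2.
  apply: le_trans (N_F n hTt) _; apply: hB hx hx1; exact: leq_trans (leq_maxr nA nB) hn.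
have h2 : N (tail n (T x)) <= e / 2.
  apply: hA hx hx1; exact: leq_trans (leq_maxl nA nB) hn.
apply: le_trans (lerD h1 h2) _.
by rewrite -splitr.
Qed.


Lemma F_lin n a (x y : nat -> R) : Fproj n (vadd (vscal a x) y) = vadd (vscal a (Fproj n x)) (Fproj n y).
Proof.
apply: funext => k; rewrite /Fproj /vadd /vscal; case: ifP => _ //.
by rewrite mulr0 addr0.
Qed.

Lemma bdd_FTF T n : bdd_op p T -> bdd_op p (fun x => Fproj n (T (Fproj n x))).
Proof.
move=> hT; split.
- move=> x hx /=; exact: (inlp_F n (op_inlp hT (inlp_F n hx))).
- move=> a x y hx hy.
  change (Fproj n (T (Fproj n (vadd (vscal a x) y))) =
    vadd (vscal a (Fproj n (T (Fproj n x)))) (Fproj n (T (Fproj n y)))).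
  by rewrite F_lin (op_lin hT a (inlp_F n hx) (inlp_F n hy)) F_lin.
- have [C [C0 hC]] := op_bound hT; exists C => x hx.
  apply: le_trans (N_F n (op_inlp hT (inlp_F n hx))) _.
  exact: le_trans (hC _ (inlp_F n hx)) (ler_wpM2l C0 (N_F n hx)).
Qed.

Lemma bdd_vsub A B : bdd_op p A -> bdd_op p B -> bdd_op p (fun x => vsub (A x) (B x)).
Proof.
move=> hA hB; split.
- move=> x hx /=; exact: (inlp_sub (op_inlp hA hx) (op_inlp hB hx)).
- move=> a x y hx hy.
  change (vsub (A (vadd (vscal a x) y)) (B (vadd (vscal a x) y)) =
    vadd (vscal a (vsub (A x) (B x))) (vsub (A y) (B y))).
  rewrite (op_lin hA a hx hy) (op_lin hB a hx hy).
  apply: funext => k; rewrite /vsub /vadd /vscal; ring.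
- have [C1 [C10 hC1]] := op_bound hA; have [C2 [C20 hC2]] := op_bound hB.
  exists (C1 + C2) => x hx.
  apply: le_trans (N_sub_le (op_inlp hA hx) (op_inlp hB hx)) _.
  rewrite mulrDl; exact: lerD (hC1 x hx) (hC2 x hx).
Qed.

Lemma compact_FTF T n : compact_op p T -> compact_op p (fun x => Fproj n (T (Fproj n x))).
Proof.
move=> [hT hc]; split; first exact: bdd_FTF.
move=> u hu [C hC].
have := hc (fun k => Fproj n (u k)) (fun k => inlp_F n (hu k))
  (ex_intro _ C (fun k => le_trans (N_F n (hu k)) (hC k))).
move=> [phi [hphi [y [hy hconv]]]]; exists phi; split; first exact: hphi.
exists (Fproj n y); split; first exact: (inlp_F n hy).
apply: (squeeze0 _ _ _ hconv) => m; apply/andP; split; first exact: N_ge0.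
have hTu := op_inlp hT (inlp_F n (hu (phi m))).
have -> : (fun k => Fproj n (T (Fproj n (u (phi m)))) k - Fproj n y k) =
    Fproj n (vsub (T (Fproj n (u (phi m)))) y).
  by apply: funext => k; rewrite /Fproj /vsub; case: ifP; rewrite ?subr0.
exact: (N_F n (inlp_sub hTu hy)).
Qed.

Lemma mat_FTF T n i j : bdd_op p T ->
  mat (fun x => Fproj n (T (Fproj n x))) i j = if (i < n)%N && (j < n)%N then mat T i j else 0.
Proof.
move=> hT; rewrite /mat Fproj_e /Fproj.
case: (i < n)%N; case: (j < n)%N => //=; by rewrite (op_zero hT).
Qed.

Lemma arith_eta (C eta : R) : 0 <= C -> 0 < eta -> C * (eta / (C + 1)) <= eta.
Proof.
move=> C0 e0; have C1 : 0 < C + 1 by apply: ltr_wpDl C0 ltr01.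
rewrite mulrA ler_pdivrMr //; nra.
Qed.

Lemma transpose_bound K S n e : bdd_op p K -> bdd_op p S -> transpose_of S K ->
  (forall x, inlp p x -> N x <= 1 -> N (vsub (Fproj n (S (Fproj n x))) (S x)) <= e) ->
  forall S', bdd_op p S' -> transpose_of S' (fun x => vsub (Fproj n (K (Fproj n x))) (K x)) ->
  forall x, inlp p x -> N x <= 1 -> N (S' x) <= e.
Proof.
move=> hK hS hKS hb S' hS' hS'D.
pose G := fun x => vsub (Fproj n (S (Fproj n x))) (S x).
have hG : bdd_op p G := bdd_vsub _ _ (bdd_FTF _ n hS) hS.
have he : forall j, S' (ebasis R j) = G (ebasis R j).
  move=> j; apply: funext => i.
  have := hS'D i j; rewrite /mat => ->.
  have h2 := hKS i j; rewrite /mat in h2.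
  rewrite /G /vsub !Fproj_e /Fproj.
  case: (i < n)%N; case: (j < n)%N => //=; rewrite ?(op_zero hK) ?(op_zero hS) ?h2 //.
move=> x hx hx1.
have [C' [C0' hC']] := op_bound hS'.
apply/ler_addgt0Pr => eta heta.
have C1 : 0 < C' + 1 by apply: ltr_wpDl C0' ltr01.
set d := eta / (C' + 1).
have d0 : 0 < d by apply: divr_gt0.
have [m hm] := @tail_small x d hx d0.
have hF := inlp_F m hx; have ht := inlp_tail m hx.
have hsplit : S' x = vadd (S' (Fproj m x)) (S' (tail m x)).
  by rewrite -(op_add hS' hF ht) -FtailE.
have [_ htri] := tri (op_inlp hS' hF) (op_inlp hS' ht).
rewrite -hsplit in htri.
apply: le_trans htri _; apply: lerD.
  rewrite (agree_F _ _ hS' hG he m x hx).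
  apply: hb hF _; exact: le_trans (N_F m hx) hx1.
apply: le_trans (hC' _ ht) _.
apply: le_trans (ler_wpM2l C0' (hm m (leqnn m))) _.
exact: arith_eta _ _ C0' heta.
Qed.

Lemma opnorm_ub A c : (forall x, inlp p x -> N x <= 1 -> N (A x) <= c) ->
  0 <= opnorm p A /\ opnorm p A <= c.
Proof.
move=> H.
set E := [set r | exists x, [/\ inlp p x, lpnorm p x <= 1 & r = lpnorm p (A x)]].
have hne : E (N (A vzero)).
  exists vzero; split; [exact: inlp0 | rewrite N0; exact: ler01 | by []].
have hub : ubound E c by move=> r [x [hx hx1 ->]]; exact: H x hx hx1.
split.
  apply: le_trans (N_ge0 (A vzero)) _.
  have hs : has_sup E by split; [exists (N (A vzero)) | exists c].
  exact: sup_upper_bound hs _ hne.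
apply: ge_sup hub; exists (N (A vzero)); exact: hne.
Qed.

Lemma opnormT_ub D c : 0 <= c ->
  (forall S, bdd_op p S -> transpose_of S D -> opnorm p S <= c) -> opnorm_transpose p D <= c.
Proof.
move=> c0 H; rewrite /opnorm_transpose.
set E := [set r | exists S, [/\ bdd_op p S, transpose_of S D & r = opnorm p S]].
have hub : ubound E c by move=> r [S [hS hSD ->]]; exact: H S hS hSD.
have [[r hr]|hne] := pselect (exists r, E r).
  apply: ge_sup hub; exists r; exact: hr.
have -> : E = set0.
  by apply/seteqP; split => r // hr; exfalso; apply: hne; exists r.
by rewrite sup0.
Qed.


Lemma main_sec K : compact_dual_op p K ->
  (forall n : nat, compact_dual_op p (fun x => Fproj n (K (Fproj n x)))) /\
  (fun n : nat => maxnorm p (fun x k => Fproj n (K (Fproj n x)) k - K x k))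
    @ \oo --> (0 : R).
Proof.
move=> [hKc [S [hSc hSK]]].
have hK := hKc.1; have hS := hSc.1.
split.
  move=> n; split; first exact: compact_FTF.
  exists (fun x => Fproj n (S (Fproj n x))); split; first exact: compact_FTF.
  move=> i j; rewrite (mat_FTF _ _ _ _ hS) (mat_FTF _ _ _ _ hK) (hSK i j) andbC.
  by [].
apply/cvgrPdist_le => e he.
have [n1 h1] := main_bound _ hKc _ he.
have [n2 h2] := main_bound _ hSc _ he.
near=> n.
have hn : (maxn n1 n2 <= n)%N by near: n; exact: nbhs_infty_ge.
have hD : forall x, inlp p x -> N x <= 1 ->
    N ((fun x k => Fproj n (K (Fproj n x)) k - K x k) x) <= e.
  move=> x hx hx1; exact: (h1 n (leq_trans (leq_maxl n1 n2) hn) x hx hx1).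
have [hD0 hDe] := opnorm_ub _ _ hD.
have hb2 := h2 n (leq_trans (leq_maxr n1 n2) hn).
have hT : opnorm_transpose p (fun x k => Fproj n (K (Fproj n x)) k - K x k) <= e.
  apply: opnormT_ub (ltW he) _ => S' hS' hS'D.
  exact: (opnorm_ub _ _ (transpose_bound K S n e hK hS hSK hb2 S' hS' hS'D)).2.
rewrite sub0r normrN ger0_norm.
  rewrite /maxnorm ge_max; apply/andP; split; [exact: hDe | exact: hT].
rewrite /maxnorm le_max; apply/orP; left; exact: hD0.
Unshelve. all: by end_near.
Qed.

End S.

Theorem mainTheorem12 (R : realType) (p : R) (hp : 1 < p)
  (K : (nat -> R) -> (nat -> R)) (hK : compact_dual_op p K) :
  (forall n : nat, compact_dual_op p (fun x => Fproj n (K (Fproj n x)))) /\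
  (fun n : nat => maxnorm p (fun x k => Fproj n (K (Fproj n x)) k - K x k))
    @ \oo --> (0 : R).
Proof. exact: (@main_sec R p hp K hK). Qed.
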